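(* Let $p$ be a prime, $q=p^r$, $\mathscr{C}\subseteq\mathbb{F}_q^n$ a linear code over $\mathbb{F}_q$ of dimension $k$ with $1\le k<n$, and $\mathscr{D}=\{(\lambda,\ldots,\lambda):\lambda\in\mathbb{F}_{q^k}\}\subset\mathbb{F}_{q^k}^m$ ($m\ge2$). Let $f_1,\ldots,f_{q^k}:\mathscr{C}\to\mathbb{F}_p$ be functions such that the $q^k\times q^k$ matrix $H=[\zeta^{f_j(\mathbf{c})}]_{1\le j\le q^k,\ \mathbf{c}\in\mathscr{C}}$ is a normalized $\mathrm{BH}(q^k,p)$ matrix, i.e. $HH^\dagger=q^kI$, $f_1\equiv0$ and $f_j(\mathbf{0})=0$ for all $j$. Put $\phi_j=q^{-k/2}\sum_{\mathbf{c}\in\mathscr{C}}\zeta^{f_j(\mathbf{c})}|\mathbf{c}\rangle$ and $Q=\operatorname{span}\{\phi_j^{\otimes m}:1\le j\le q^k\}\subseteq(\mathbb{C}^q)^{\otimes nm}$. If $Q$ is a stabilizer code, then $H$ is equivalent to the $rk$-fold Kronecker product of the Fourier matrix $[\zeta^{(a-1)(b-1)}]_{a,b=1}^p$ of order $p$.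
   Context: $\zeta=e^{2\pi i/p}$; $\operatorname{tr}:\mathbb{F}_q\to\mathbb{F}_p$ is the trace; $\mathbf{u}.\mathbf{v}=\sum_iu_iv_i$. Qudits: $(\mathbb{C}^q)^{\otimes N}$ has orthonormal basis $|\mathbf{x}\rangle$, $\mathbf{x}\in\mathbb{F}_q^N$. $X(a)|x\rangle=|x+a\rangle$, $Z(b)|x\rangle=\zeta^{\operatorname{tr}(bx)}|x\rangle$, extended to $X(\mathbf{a}),Z(\mathbf{b})$ on $(\mathbb{C}^q)^{\otimes N}$ by tensor products. Error group $\mathcal{P}_N=\{\omega^cX(\mathbf{a})Z(\mathbf{b}):\mathbf{a},\mathbf{b}\in\mathbb{F}_q^N\}$ with $\omega=\zeta,c\in\mathbb{F}_p$ for odd $p$ and $\omega=i$, $c\in\{0,1,2,3\}$ for $p=2$. For a subspace $Q$, $\operatorname{Stab}(Q)=\{E\in\mathcal{P}_N:Ev=v\ \forall v\in Q\}$, and $Q$ is a stabilizer code if $Q=\{v:Ev=v\ \forall E\in\operatorname{Stab}(Q)\}$. A $\mathrm{BH}(N,p)$ matrix is an $N\times N$ matrix with entries $p$-th roots of unity and $HH^\dagger=NI$; two such matrices are equivalent if one is obtained from the other by permuting rows and columns and multiplying rows and columns by $p$-th roots of unity. *)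

(* Defs.v *)
From HB Require Import structures.
From mathcomp Require Import all_boot all_order all_algebra all_field.
From mathcomp Require Import mxtens.
Unset Printing Implicit Defensive.
Import Order.TTheory GRing.Theory Num.Theory.
Local Open Scope ring_scope.

(* zeta = e^{2 pi i/p} : p.-root(-1) has the minimal argument pi/p. *)
Definition zeta (p : nat) : algC := (p.-root (-1)) ^+ 2.

Definition omega (p : nat) : algC := if p == 2%N then 'i else zeta p.
Definition pauli_ord (p : nat) : nat := if p == 2%N then 4%N else p.

(* absolute trace F_q -> F_p (q = p^r), as an element of F ... *)
Definition trF {F : finFieldType} (p r : nat) (x : F) : F :=
  \sum_(i < r) x ^+ (p ^ i).
(* ... and its representative in {0,..,p-1} (the element t of F_p = prime subfield) *)
Definition trN {F : finFieldType} (p r : nat) (x : F) : nat :=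
  oapp (fun i : 'I_p => nat_of_ord i) 0%N [pick i : 'I_p | (i%:R : F) == trF p r x].

(* States of qudits indexed by a finite type I: functions on the basis {ffun I -> F}. *)
Definition qstate (F : finFieldType) (I : finType) := {ffun I -> F} -> algC.

(* The error operator omega^c X(a) Z(b):  X(a)Z(b)|x> = zeta^{tr(b.x)} |x+a>. *)
Definition pauli {F : finFieldType} (p r : nat) {I : finType}
  (c : nat) (a b : {ffun I -> F}) (v : qstate F I) : qstate F I :=
  fun y => omega p ^+ c * zeta p ^+ trN p r (\sum_i b i * (y i - a i))
           * v [ffun i => y i - a i].

Definition in_stab {F : finFieldType} (p r : nat) {I : finType}
  (Q : qstate F I -> Prop) (c : 'I_(pauli_ord p)) (a b : {ffun I -> F}) : Prop :=
  forall v, Q v -> pauli p r c a b v = v.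

Definition is_stabilizer_code {F : finFieldType} (p r : nat) {I : finType}
  (Q : qstate F I -> Prop) : Prop :=
  forall v, Q v <-> (forall c a b, in_stab p r Q c a b -> pauli p r c a b v = v).

Definition in_span {F : finFieldType} {I : finType} {K : nat}
  (Phi : 'I_K -> qstate F I) (v : qstate F I) : Prop :=
  exists alpha : 'I_K -> algC, v = fun x => \sum_(j < K) alpha j * Phi j x.

Definition is_BH (N p : nat) (H : 'M[algC]_N) : Prop :=
  (forall i j, H i j ^+ p = 1) /\ H *m (map_mx (fun z : algC => z^*) H)^T = (N%:R)%:M.

Definition bh_equiv (p : nat) {N1 N2 : nat} (A : 'M[algC]_N1) (B : 'M[algC]_N2) : Prop :=
  exists (s t : 'I_N1 -> 'I_N2) (u v : 'I_N1 -> algC),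
    [/\ bijective s, bijective t, (forall i, u i ^+ p = 1), (forall j, v j ^+ p = 1)
      & forall i j, A i j = u i * v j * B (s i) (t j)].

Definition fourier (p : nat) : 'M[algC]_p := \matrix_(a < p, b < p) zeta p ^+ (a * b).

(* the l-th codeword in a fixed enumeration of C (columns of H) *)
Definition cw {F : finFieldType} {n : nat} (C : {vspace 'rV[F]_n}) (l : nat) : 'rV[F]_n :=
  nth 0 (enum [set x : 'rV[F]_n | x \in C]) l.

Definition Hmat {F : finFieldType} {p n N : nat} (C : {vspace 'rV[F]_n})
  (f : 'I_N -> 'rV[F]_n -> 'I_p) : 'M[algC]_N :=
  \matrix_(j < N, l < N) zeta p ^+ f j (cw C l).

(* phi_j = q^{-k/2} sum_{c in C} zeta^{f_j(c)} |c>, with q^k = N *)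
Definition phi {F : finFieldType} {p n N : nat} (C : {vspace 'rV[F]_n})
  (f : 'I_N -> 'rV[F]_n -> 'I_p) (j : 'I_N) (y : 'rV[F]_n) : algC :=
  if y \in C then (sqrtC N%:R)^-1 * zeta p ^+ f j y else 0.

(* phi_j^{(x) m} on nm qudits indexed by 'I_m * 'I_n (copy i, position l) *)
Definition phi_tens {F : finFieldType} {p n N : nat} (m : nat) (C : {vspace 'rV[F]_n})
  (f : 'I_N -> 'rV[F]_n -> 'I_p) (j : 'I_N) : qstate F ('I_m * 'I_n)%type :=
  fun x => \prod_(i < m) phi C f j (\row_(l < n) x (i, l)).

(* Main.v *)
Require Import Defs.
From HB Require Import structures.
From mathcomp Require Import all_boot all_order all_algebra all_field.
From mathcomp Require Import mxtens.
From Stdlib Require Import FunctionalExtensionality.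
Import Order.TTheory GRing.Theory Num.Theory.
Local Open Scope ring_scope.



Lemma zetaXp p : (0 < p)%N -> zeta p ^+ p = 1.
Proof.
move=> p0; rewrite /zeta -exprM mulnC exprM rootCK //.
by rewrite expr2 mulN1r opprK.
Qed.

Lemma zeta_mod p n : (0 < p)%N -> zeta p ^+ (n %% p) = zeta p ^+ n.
Proof. by move=> p0; apply: expr_mod; apply: zetaXp. Qed.

Lemma zeta_prim p : prime p -> zeta p != 1 -> p.-primitive_root (zeta p).
Proof.
move=> pp z1; have p0 := prime_gt0 pp.
have [m pm dm] := poly.prim_order_exists p0 (zetaXp _ p0).
case/primeP: pp => _ /(_ m dm) /orP[/eqP m1|/eqP mp]; last by rewrite mp in pm.
by move: pm; rewrite m1 => /prim_expr_order; rewrite expr1 => /eqP; rewrite (negbTE z1).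
Qed.

Lemma valFp p n : prime p -> (n%:R : 'F_p) = (n %% p)%N :> nat.
Proof.
by move=> pp; rewrite val_Fp_nat.
Qed.

Lemma ltFp p (x : 'F_p) : prime p -> (x < p)%N.
Proof. by move=> pp; have := ltn_ord x; rewrite [X in (_ < X)%N -> _]Fp_cast. Qed.

Lemma Fp_natE p (x : 'F_p) : prime p -> x = (x : nat)%:R.
Proof. by move=> pp; apply: val_inj => /=; rewrite valFp // modn_small // ltFp. Qed.



Lemma fourier_rec p K : exists D : 'I_(p ^ K.+1) -> K.+1.-tuple 'I_p,
  bijective D /\ forall i j, (ntensmx_rec (fourier p) K) i j
     = zeta p ^+ (\sum_(l < K.+1) tnth (D i) l * tnth (D j) l).
Proof.
elim: K => [|K [D [bD HD]]].
  exists (fun i : 'I_(p ^ 1) => [tuple (i : 'I_p)]); split.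
    apply: inj_card_bij; last by rewrite card_tuple !card_ord.
    by move=> i j /(congr1 (fun t => tnth t ord0)); rewrite !tnth0.
  by move=> i j; rewrite /= mxE big_ord1 !tnth0.
pose D' (i : 'I_(p ^ K.+2)) : K.+2.-tuple 'I_p :=
  [tuple of (@mxtens_unindex p (p ^ K.+1) i).1 :: D (@mxtens_unindex p (p ^ K.+1) i).2].
exists D'; split.
  apply: inj_card_bij; last by rewrite card_tuple !card_ord.
  move=> i j eqD.
  have h0 := congr1 (fun t => tnth t ord0) eqD.
  have h1 : D (@mxtens_unindex p (p ^ K.+1) i).2 = D (@mxtens_unindex p (p ^ K.+1) j).2.
    apply: eq_from_tnth => l.
    by have := congr1 (fun t => tnth t (lift ord0 l)) eqD; rewrite !tnthS.
  rewrite /= !tnth0 in h0.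
  have h2 := bij_inj bD h1.
  rewrite -(@mxtens_unindexK p (p ^ K.+1) i) -(@mxtens_unindexK p (p ^ K.+1) j).
  congr mxtens_index; move: h0 h2.
  by case: (mxtens_unindex i) => a b; case: (mxtens_unindex j) => c d /= -> ->.
move=> i j.
rewrite /= mxE HD [in RHS]big_ord_recl mxE -exprD; congr (_ ^+ _).
rewrite /D' !tnth0; congr (_ + _)%N; apply: eq_bigr => l _.
by rewrite !tnthS.
Qed.

Lemma fourier_tens p K : exists D : 'I_(p ^ K) -> K.-tuple 'I_p,
  bijective D /\ forall i j, (fourier p ^t K) i j
     = zeta p ^+ (\sum_(l < K) tnth (D i) l * tnth (D j) l).
Proof.
case: K => [|K]; last exact: fourier_rec.
exists (fun _ => [tuple]); split.
  apply: inj_card_bij; last by rewrite card_tuple !card_ord.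
  by move=> i j _; rewrite [i]ord1 [j]ord1.
by move=> i j; rewrite big_ord0 expr0 [i]ord1 [j]ord1 /= mxE eqxx.
Qed.



Lemma idem_lemma N (H : 'M[algC]_N) (G al : 'I_N -> algC) (l0 : 'I_N) :
  H \in unitmx -> (forall t, H t l0 = 1) -> G l0 = 1 ->
  (forall c c', G c * G c' = \sum_t al t * (H t c * H t c')) ->
  exists s, forall c, G c = H s c.
Proof.
move=> Hu H1 G1 HG.
pose a := \row_t al t. pose g := \row_c G c.
have ga : g = a *m H.
  apply/rowP => c; rewrite !mxE; have := HG c l0; rewrite G1 mulr1 => ->.
  by apply: eq_bigr => t _; rewrite H1 mulr1 !mxE.
have gg : g^T *m g = H^T *m diag_mx a *m H.
  apply/matrixP => c c'; rewrite !mxE big_ord1 !mxE HG.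
  apply: eq_bigr => t _; rewrite mul_mx_diag !mxE.
  by rewrite mulrA (mulrC (al t)).
have aa : a^T *m a = diag_mx a.
  have Htu : H^T \in unitmx by rewrite unitmx_tr.
  move: gg; rewrite ga trmx_mul -!mulmxA => e.
  have e1 := congr1 (mulmx (invmx H^T)) e; rewrite !mulKmx // in e1.
  rewrite mulmxA in e1.
  by have e2 := congr1 (mulmx^~ (invmx H)) e1; rewrite !mulmxK // in e2.
have Eaa s u : al s * al u = al s *+ (s == u).
  have := congr1 (fun M : 'M_N => M s u) aa; rewrite !mxE big_ord1 !mxE.
  by [].
case: (pickP (fun s => al s != 0)) => [s ns | h0]; last first.
  have := congr1 (fun M : 'rV_N => M 0 l0) ga; rewrite !mxE G1 big1 => [/eqP|t _]; first by rewrite oner_eq0.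
  by have := h0 t; rewrite /= mxE => /negbFE/eqP ->; rewrite mul0r.
have as1 : al s = 1.
  by apply: (mulIf ns); rewrite mul1r Eaa eqxx mulr1n.
have au0 u : u != s -> al u = 0.
  move=> us; have := Eaa s u; rewrite eq_sym (negbTE us) mulr0n as1 mul1r.
  by [].
exists s => c; have := congr1 (fun M : 'rV_N => M 0 c) ga; rewrite !mxE => ->.
rewrite (bigD1 s) //= big1 ?addr0 => [|t ts]; first by rewrite mxE as1 mul1r.
by rewrite mxE au0 ?mul0r.
Qed.



Definition rho {F : finFieldType} {p n N : nat} (m : nat)
  (f : 'I_N -> 'rV[F]_n -> 'I_p) (j : 'I_N) (x : {ffun ('I_m * 'I_n)%type -> F}) : algC :=
  \prod_(i < m) zeta p ^+ f j (\row_(l < n) x (i, l)).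

Lemma psiE p (F : finFieldType) n m N (C : {vspace 'rV[F]_n})
  (f : 'I_N -> 'rV[F]_n -> 'I_p) (j0 : 'I_N) :
  (forall c, c \in C -> f j0 c = 0%N :> nat) ->
  forall t x, phi_tens m C f t x = phi_tens m C f j0 x * rho m f t x.
Proof.
move=> f0 t x; rewrite /phi_tens /rho -big_split; apply: eq_bigr => i _.
by rewrite /phi /=; case: ifP => inC; [rewrite (f0 _ inC) expr0 mulr1 | rewrite mul0r].
Qed.

Lemma stab_prod p r (F : finFieldType) n m N (C : {vspace 'rV[F]_n})
  (f : 'I_N -> 'rV[F]_n -> 'I_p) (j0 : 'I_N) :
  (forall c, c \in C -> f j0 c = 0%N :> nat) ->
  is_stabilizer_code p r (in_span (phi_tens m C f)) ->
  forall j l, exists al : 'I_N -> algC, forall x,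
    phi_tens m C f j0 x * rho m f j x * rho m f l x = \sum_t al t * phi_tens m C f t x.
Proof.
move=> f0 Hst j l.
have pE := @psiE p F n m N C f j0 f0.
have inQ t : in_span (phi_tens m C f) (phi_tens m C f t).
  exists (fun u => (u == t)%:R); apply: functional_extensionality => x.
  rewrite (bigD1 t) //= big1 ?addr0 => [|u ut]; first by rewrite eqxx mul1r.
  by rewrite (negbTE ut) mul0r.
pose v x := phi_tens m C f j0 x * rho m f j x * rho m f l x.
have : in_span (phi_tens m C f) v.
  apply/(proj2 (Hst v)) => c a b st; apply: functional_extensionality => y.
  have e0 := equal_f (st _ (inQ j0)) y.
  have ej := equal_f (st _ (inQ j)) y.
  have el := equal_f (st _ (inQ l)) y.
  move: e0 ej el; rewrite /pauli /v !(pE j) !(pE l).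
  set y' := [ffun i => y i - a i].
  set lam := omega p ^+ c * _.
  move=> e0 ej el.
  have h : phi_tens m C f j0 y * rho m f l y' = phi_tens m C f j0 y * rho m f l y.
    by rewrite -{1}e0 -mulrA el.
  by rewrite !mulrA -(mulrA lam) ej mulrAC h mulrAC.
case=> al e; exists al => x.
by have := equal_f e x.
Qed.



Lemma zeta_neq0 p : (0 < p)%N -> zeta p != 0.
Proof.
move=> p0; apply/eqP => z0; have := zetaXp _ p0; rewrite z0 expr0n.
by rewrite (gtn_eqF p0) => /eqP; rewrite eq_sym oner_eq0.
Qed.

Lemma eval_pt p (F : finFieldType) n m N (C : {vspace 'rV[F]_n})
  (f : 'I_N -> 'rV[F]_n -> 'I_p) :
  (0 < p)%N -> (0 < N)%N -> (1 < m)%N -> (forall t, f t 0 = 0%N :> nat) ->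
  forall c c', c \in C -> c' \in C ->
  exists x, (forall t, rho m f t x = zeta p ^+ f t c * zeta p ^+ f t c') /\
            (forall t, phi_tens m C f t x != 0).
Proof.
move=> p0 N0 hm ft0 c c' cC c'C.
pose i0 : 'I_m := Ordinal (ltnW hm).
pose i1 : 'I_m := Ordinal hm.
have i10 : i1 != i0 by [].
pose x := [ffun ij : 'I_m * 'I_n => if ij.1 == i0 then c 0 ij.2
           else if ij.1 == i1 then c' 0 ij.2 else 0].
have rx i : \row_l x (i, l) = if i == i0 then c else if i == i1 then c' else 0.
  apply/rowP => l; rewrite !mxE ffunE /=.
  by case: (i == i0) => //; case: (i == i1) => //; rewrite mxE.
have rin i : \row_l x (i, l) \in C.
  by rewrite rx; case: ifP => _ //; case: ifP => _ //; apply: mem0v.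
exists x; split.
  move=> t; rewrite /rho (bigD1 i0) //= (bigD1 i1) //= big1 ?mulr1.
    by rewrite !rx eqxx (negbTE i10) eqxx.
  move=> i /andP[ni1 ni0]; rewrite rx (negbTE ni0) (negbTE ni1) ft0 expr0 //.
move=> t; rewrite /phi_tens; apply/prodf_neq0 => i _.
rewrite /phi rin mulf_neq0 //; last by rewrite expf_neq0 // zeta_neq0.
by rewrite invr_eq0 sqrtC_eq0 pnatr_eq0 -lt0n.
Qed.



Theorem theorem4p2 (p r : nat) (F : finFieldType) (n k m : nat)
  (C : {vspace 'rV[F]_n}) (f : 'I_((p ^ r) ^ k) -> 'rV[F]_n -> 'I_p) :
  prime p -> #|F| = (p ^ r)%N -> \dim C = k -> (1 <= k)%N -> (k < n)%N -> (2 <= m)%N ->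
  is_BH ((p ^ r) ^ k)%N p (Hmat C f) ->
  (forall j : 'I_((p ^ r) ^ k), nat_of_ord j = 0%N ->
     forall c, c \in C -> nat_of_ord (f j c) = 0%N) ->
  (forall j, nat_of_ord (f j 0) = 0%N) ->
  is_stabilizer_code p r (in_span (phi_tens m C f)) ->
  bh_equiv p (Hmat C f) (fourier p ^t (r * k)).
Proof.
move=> pp hF hk k1 kn m2 [_ HH] f0 f00 Hst.
have p0 := prime_gt0 pp.
have p1 := prime_gt1 pp.
have r1 : (0 < r)%N.
  rewrite lt0n; apply/negP => /eqP r0; move: hF; rewrite r0 expn0 => hF.
  have : (1 < #|F|)%N.
    by apply/card_gt1P; exists 0, 1; rewrite !inE eq_sym oner_eq0.
  by rewrite hF.
have N2 : (1 < (p ^ r) ^ k)%N.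
  apply: (leq_trans p1); apply: (@leq_trans (p ^ r)).
    by rewrite -{1}(expn1 p) leq_pexp2l.
  by rewrite -{1}(expn1 (p ^ r)) leq_pexp2l // expn_gt0 p0.
set N := ((p ^ r) ^ k)%N in f HH f0 f00 Hst N2 *.
have N0 : (0 < N)%N by apply: ltnW.
set H := Hmat C f in HH *.
have cardC : #|[set x : 'rV[F]_n | x \in C]| = N.
  by rewrite cardsE card_vspace hF hk.
have sz : size (enum [set x : 'rV[F]_n | x \in C]) = N by rewrite -cardE cardC.
have cwC (l : 'I_N) : cw C l \in C.
  have : nth 0 (enum [set x : 'rV[F]_n | x \in C]) l \in enum [set x : 'rV[F]_n | x \in C].
    by apply: mem_nth; rewrite sz.
  by rewrite mem_enum inE.
have [l0 cw0] : exists l0 : 'I_N, cw C l0 = 0.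
  have i0 : (index (0%R : 'rV[F]_n) (enum [set x : 'rV[F]_n | x \in C]) < N)%N.
    by rewrite -sz index_mem mem_enum inE mem0v.
  by exists (Ordinal i0); rewrite /cw /= nth_index // mem_enum inE mem0v.
have HE0 j c : H j c = zeta p ^+ f j (cw C c) by rewrite mxE.
pose Hc := (map_mx (fun z : algC => z^*) H)^T.
have Nn0 : (N%:R : algC) != 0 by rewrite pnatr_eq0 -lt0n.
have Hinv : H *m (N%:R^-1 *: Hc) = 1%:M.
  by rewrite -scalemxAr HH scale_scalar_mx mulVf.
have Hu : H \in unitmx := (mulmx1_unit Hinv).1.
have HcH : Hc *m H = N%:R%:M.
  have := congr1 (fun M : 'M_N => N%:R *: M) (mulmx1C Hinv).
  by rewrite -scalemxAl scalerA mulfV // scale1r => ->; rewrite scale_scalar_mx mulr1.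
have row_inj j j' : (forall l, H j l = H j' l) -> j = j'.
  move=> e; case: (eqVneq j j') => // ne.
  have d1 := congr1 (fun M : 'M_N => M j j') HH.
  have d2 := congr1 (fun M : 'M_N => M j' j') HH.
  rewrite !mxE in d1 d2.
  rewrite (eq_bigr (fun l => H j' l * ((H ^ (fun z : algC => z^*))%sesqui)^T l j')) in d1.
    by move: d1; rewrite d2 (negbTE ne) eqxx mulr0n mulr1n => /eqP; rewrite (negbTE Nn0).
  by move=> l _; rewrite e.
have col_inj l l' : (forall j, H j l = H j l') -> l = l'.
  move=> e; case: (eqVneq l l') => // ne.
  have d1 := congr1 (fun M : 'M_N => M l l') HcH.
  have d2 := congr1 (fun M : 'M_N => M l' l') HcH.
  rewrite !mxE in d1 d2.
  rewrite (eq_bigr (fun j => Hc l' j * H j l')) in d1.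
    by move: d1; rewrite d2 (negbTE ne) eqxx mulr0n mulr1n => /eqP; rewrite (negbTE Nn0).
  by move=> j _; rewrite /Hc !mxE -!HE0 e.
have z1 : zeta p != 1.
  apply/negP => /eqP z1.
  have d := congr1 (fun M : 'M_N => M (Ordinal N0) (Ordinal N2)) HH.
  move: d; rewrite !mxE /=.
  rewrite (eq_bigr (fun _ => 1)) => [|l _]; last by rewrite !mxE z1 !expr1n conjC1 mulr1.
  by rewrite sumr_const card_ord mulr0n => /eqP; rewrite (negbTE Nn0).
have prim := zeta_prim _ pp z1.
pose j0 : 'I_N := Ordinal N0.
have f0' : forall c, c \in C -> f j0 c = 0%N :> nat by apply: f0.
have clos j l : exists t, forall c, H j c * H l c = H t c.
  have [al e] := @stab_prod p r F n m N C f j0 f0' Hst j l.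
  apply: (@idem_lemma N H (fun c => H j c * H l c) al l0 Hu).
  - by move=> t; rewrite HE0 cw0 f00.
  - by rewrite !HE0 cw0 !f00 mulr1.
  move=> c c'.
  have [x [hr hn]] := @eval_pt p F n m N C f p0 N0 m2 f00 _ _ (cwC c) (cwC c').
  have e2 : \sum_t al t * phi_tens m C f t x
          = phi_tens m C f j0 x * \sum_t al t * rho m f t x.
    rewrite mulr_sumr; apply: eq_bigr => t _.
    by rewrite (@psiE p F n m N C f j0 f0' t x) mulrCA.
  have := e x; rewrite e2 -mulrA => /(mulfI (hn j0)).
  rewrite !hr => eq; rewrite !HE0 mulrACA eq.
  by apply: eq_bigr => t _; rewrite hr !HE0.
pose E (j : 'I_N) : 'rV['F_p]_N := \row_c ((f j (cw C c) : nat)%:R : 'F_p).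
have HE j c : H j c = zeta p ^+ (E j 0 c : nat) by rewrite HE0 mxE valFp // modn_small.
have Eadd j l : exists t, E j + E l = E t.
  have [t ht] := clos j l; exists t; apply/rowP => c; rewrite !mxE -natrD.
  apply: val_inj => /=; rewrite !valFp //; apply/eqP.
  by rewrite -(eq_prim_root_expr prim) exprD -!HE0 ht.
have E0 : E j0 = 0 by apply/rowP => c; rewrite !mxE f0' ?cwC.
have EmulN j n0 : exists t, E j *+ n0 = E t.
  elim: n0 => [|n0 [t ht]]; first by exists j0; rewrite mulr0n E0.
  by rewrite mulrS ht; apply: Eadd.
have Escale (a : 'F_p) j : exists t, a *: E j = E t.
  by rewrite (@Fp_natE p a pp) scaler_nat; apply: EmulN.
pose V := <<codom E>>%VS.
have inV j : E j \in V by apply: memv_span; apply: codom_f.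
have memV x : x \in V -> exists j, x = E j.
  move=> xV; rewrite (@coord_span _ _ _ (in_tuple (codom E)) x xV).
  apply: (big_ind (fun y => exists j, y = E j)).
  - by exists j0.
  - by move=> _ _ [j ->] [l ->]; have [t ->] := Eadd j l; exists t.
  move=> i _; have : (in_tuple (codom E))`_i \in codom E by apply: mem_nth.
  by case/codomP => j ->; have [t ->] := Escale (coord (in_tuple (codom E)) i x) j; exists t.
have Einj : injective E by move=> j j' e; apply: row_inj => c; rewrite !HE e.
have cardV : #|V| = N.
  rewrite -[RHS]card_ord -(card_codom Einj); apply: eq_card => x.
  by apply/idP/idP => [/memV [j ->]|/codomP [j ->]]; [exact: codom_f | exact: inV].
have eN := card_vspace V; rewrite cardV card_Fp // in eN.
have dimV : \dim V = (r * k)%N.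
  by apply/eqP; rewrite -(eqn_exp2l _ _ p1) -eN expnM.
rewrite -dimV.
have [D [bD HD]] := fourier_tens p (\dim V).
case: bD => Dinv DK DinvK.
pose b := vbasis V.
pose toI (x : 'F_p) : 'I_p := Ordinal (@ltFp p x pp).
pose rowT j := [tuple toI (coord b i (E j)) | i < \dim V].
pose colT c := [tuple toI (b`_i 0 c) | i < \dim V].
have Eexp j c : E j 0 c = \sum_(i < \dim V) coord b i (E j) * b`_i 0 c.
  by rewrite {1}(coord_vbasis (inV j)) summxE; apply: eq_bigr => i _; rewrite mxE.
have cardI : #|'I_(p ^ \dim V)| = #|'I_N| by rewrite !card_ord -eN.
exists (fun j => Dinv (rowT j)), (fun c => Dinv (colT c)), (fun _ => 1), (fun _ => 1); split.
- apply: inj_card_bij; last by rewrite cardI.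
  move=> j j' /(can_inj DinvK) e; apply: Einj.
  rewrite (coord_vbasis (inV j)) (coord_vbasis (inV j')); apply: eq_bigr => i _.
  have := congr1 (fun t => tnth t i) e; rewrite !tnth_mktuple => /(congr1 val) /= ev.
  by congr (_ *: _); apply: val_inj.
- apply: inj_card_bij; last by rewrite cardI.
  move=> c c' /(can_inj DinvK) e; apply: col_inj => j; rewrite !HE.
  suff -> : E j 0 c = E j 0 c' by [].
  rewrite !Eexp; apply: eq_bigr => i _; congr (_ * _).
  have := congr1 (fun t => tnth t i) e; rewrite !tnth_mktuple => /(congr1 val) /= ev.
  by apply: val_inj.
- by move=> _; rewrite expr1n.
- by move=> _; rewrite expr1n.
move=> j c; rewrite !mul1r HD !DinvK HE Eexp.
rewrite (eq_bigr (fun i => (muln (nat_of_ord (coord b i (E j))) (nat_of_ord (b`_i 0 c)))%:R)) => [|i _]; last first.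
  by rewrite natrM -!(@Fp_natE p _ pp).
rewrite -natr_sum valFp // zeta_mod //; congr (_ ^+ _); apply: eq_bigr => i _.
by rewrite !tnth_mktuple.
Qed.
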